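(* For any positive integers $g$ and $k$, \[\sum_{S\in\mathcal{C}(k,g)}e_2(S)\le 2F_{g+k},\] where $F_n$ is the $n$-th Fibonacci number ($F_1=F_2=1$, $F_{n+2}=F_{n+1}+F_n$).
   Context: A numerical semigroup $S$ is a submonoid of $\mathbb{N}_0$ with finite complement; its genus is the size of the complement, $m(S)$ its smallest nonzero element, $F(S)$ the largest element of the complement, and $e(S)$ the size of the minimal generating set $(S\setminus\{0\})\setminus((S\setminus\{0\})+(S\setminus\{0\}))$. Define $e_1(S)=\#([m(S),2m(S)-1]\cap S)$ and $e_2(S)=e(S)-e_1(S)$. $\mathcal{C}(k,g)$ is the set of numerical semigroups $S$ of genus $g$ with $2m(S)<F(S)<3m(S)$ and $F(S)=2m(S)+k$. *)

(* Defs.v *)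
From mathcomp Require Import all_boot.
From mathcomp Require Import finmap.
Set Implicit Arguments. Unset Strict Implicit. Unset Printing Implicit Defensive.


(* A numerical semigroup S is represented by its (finite) set of gaps
   G = N \ S.  S is a submonoid of N_0 with finite complement iff
   0 \notin G and N \ G is closed under addition. *)
Definition inS (G : {fset nat}) (n : nat) : bool := n \notin G.

Definition is_numsg (G : {fset nat}) : Prop :=
  inS G 0 /\ forall a b, inS G a -> inS G b -> inS G (a + b).

Definition genus (G : {fset nat}) : nat := (#|` G|)%fset.

Definition frob (G : {fset nat}) : nat := \max_(x <- G) x.

(* multiplicity m(S): smallest nonzero element of S; it lies in [1, F+1]
   since F+1 \in S. *)
Definition mult (G : {fset nat}) : nat :=
  head 0 [seq n <- iota 1 (frob G).+1 | inS G n].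

Definition min_gen (G : {fset nat}) (s : nat) : bool :=
  [&& 0 < s, inS G s &
      ~~ [exists a : 'I_s, (0 < (a : nat)) && inS G a && inS G (s - a)]].

(* e(S): every minimal generator s satisfies s <= F(S) + m(S)
   (if s > F + m then s = m + (s - m) with s - m > F nonzero in S),
   so counting in [0, F + m] counts all of them. *)
Definition embdim (G : {fset nat}) : nat :=
  count (min_gen G) (iota 0 (frob G + mult G).+1).

Definition e1 (G : {fset nat}) : nat :=
  count (inS G) (iota (mult G) (mult G)).

Definition e2 (G : {fset nat}) : nat := embdim G - e1 G.

Definition inC (k g : nat) (G : {fset nat}) : Prop :=
  [/\ is_numsg G, genus G = g,
      2 * mult G < frob G < 3 * mult G & frob G = 2 * mult G + k].

Fixpoint fib (n : nat) : nat :=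
  match n with
  | 0 => 0
  | 1 => 1
  | (p.+1 as q).+1 => fib q + fib p
  end.

(* Main.v *)
Require Import Defs.
From mathcomp Require Import all_boot.
From mathcomp Require Import finmap.
From mathcomp Require Import zify.
From Stdlib Require Import Lia.
Set Implicit Arguments. Unset Strict Implicit. Unset Printing Implicit Defensive.

Definition wt (s : seq bool) := size s + count id s.

Lemma wt_cat s t : wt (s ++ t) = wt s + wt t.
Proof. by rewrite /wt size_cat count_cat addnACA. Qed.

Lemma wt_rev s : wt (rev s) = wt s.
Proof. by rewrite /wt size_rev count_rev. Qed.

Lemma wt_cons b s : wt (b :: s) = wt s + b.+1.
Proof. by rewrite /wt /=; case: b; rewrite /= ?addn0; lia. Qed.

Fixpoint il (x y : seq bool) : seq bool :=
  match x, y with a :: x', c :: y' => a :: c :: il x' y' | _, _ => [::] end.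

Fixpoint splitff (t : seq bool) : option (seq bool * seq bool * seq bool) :=
  match t with
  | a :: c :: t' => if ~~ a && ~~ c then Some ([::], [::], t')
                    else match splitff t' with
                         | Some (xs, ys, r) => Some (a :: xs, c :: ys, r)
                         | None => None end
  | _ => None
  end.

Fixpoint unil (t : seq bool) : seq bool * seq bool :=
  match t with
  | a :: c :: t' => let (xs, ys) := unil t' in (a :: xs, c :: ys)
  | _ => ([::], [::])
  end.

Definition okp (x y : seq bool) := all (fun p => p.1 || p.2) (zip x y).

Lemma splitff_il x y t : size x = size y -> okp x y ->
  splitff (il x y ++ false :: false :: t) = Some (x, y, t).
Proof.
elim: x y => [|a x IH] [|c y] //= [] Hs /andP [Hac Hok].
by rewrite IH //; case: a c Hac {IH} => [] [].
Qed.

Lemma splitff_il0 x y : size x = size y -> okp x y -> splitff (il x y) = None.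
Proof.
elim: x y => [|a x IH] [|c y] //= [] Hs /andP [Hac Hok].
by rewrite IH //; case: a c Hac {IH} => [] [].
Qed.

Lemma unil_il x y : size x = size y -> unil (il x y) = (x, y).
Proof. by elim: x y => [|a x IH] [|c y] //= [] /IH ->. Qed.

Lemma wt_il x y : size x = size y -> wt (il x y) = wt x + wt y.
Proof.
elim: x y => [|a x IH] [|c y] //= [] /IH H.
rewrite !wt_cons H; lia.
Qed.

Definition enc (x y : seq bool) (b : bool) (ro : option (seq bool)) : bool * seq bool :=
  (b, il x y ++ match ro with
                | Some r => [:: false, false & (if b then true :: r else r)]
                | None => if b then [:: false; false] else [::] end).

Definition build (x y : seq bool) (b : bool) (ro : option (seq bool)) : seq bool :=
  x ++ (if b then [:: true] else [::]) ++ rev y ++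
    true :: (match ro with Some r => r ++ [:: true] | None => [::] end).

Definition dec (bt : bool * seq bool) :=
  let: (b, t) := bt in
  match splitff t with
  | Some (x, y, t') =>
      if b then (x, y, true, if t' is _ :: t'' then Some t'' else None)
      else (x, y, false, Some t')
  | None => let: (x, y) := unil t in (x, y, false, @None (seq bool))
  end.

Lemma decK x y b ro : size x = size y -> okp x y -> dec (enc x y b ro) = (x, y, b, ro).
Proof.
move=> Hs Hok; rewrite /enc /=.
case: ro => [r|]; case: b.
- by rewrite splitff_il.
- by rewrite splitff_il.
- by rewrite splitff_il.
- by rewrite cats0 splitff_il0 // unil_il.
Qed.

Lemma wt_enc x y b ro : size x = size y ->
  wt (enc x y b ro).2 + 2 = wt (build x y b ro).
Proof.
move=> Hs; rewrite /enc /build /= wt_cat wt_il // !wt_cat wt_rev.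
case: ro => [r|]; case: b; rewrite /= ?wt_cons ?wt_cat ?wt_cons /wt /=; lia.
Qed.

Fixpoint tl (n : nat) : seq (seq bool) :=
  match n with
  | 0 => [:: [::]]
  | 1 => [:: [:: false]]
  | (p.+1 as q).+1 => map (cons false) (tl q) ++ map (cons true) (tl p)
  end.

Lemma mem_tl s : s \in tl (wt s).
Proof.
elim: s => [|b s IH] //; rewrite wt_cons.
case: b => /=.
  by rewrite addn2 /= mem_cat; apply/orP; right; apply: map_f.
move: IH; rewrite addn1; case E: (wt s) => [|q] IH.
  by move: E; case: s {IH} => //= c s; rewrite wt_cons addnS.
by rewrite /= mem_cat; apply/orP; left; apply: map_f.
Qed.

Lemma size_tl n : size (tl n) = fib n.+1 /\ size (tl n.+1) = fib n.+2.
Proof.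
elim: n => [|n [IH1 IH2]] //=.
split => //; rewrite size_cat !size_map IH1 IH2 /=; lia.
Qed.

Definition cond (v : seq bool) := forall j, j < size v -> nth false v j || nth false (rev v) j.

Lemma okpP x y : size x = size y -> (forall i, i < size x -> nth false x i || nth false y i) -> okp x y.
Proof.
elim: x y => [|a x IH] [|c y] //= [] Hs H.
rewrite /okp /=; have := H 0 erefl; rewrite /= => -> /=; apply: IH => // i Hi; by have := H i.+1; rewrite /= ltnS; apply.
Qed.

Lemma decomp v : cond v ->
  [/\ size (take (size v)./2 v) = size (take (size v)./2 (rev v)),
      okp (take (size v)./2 v) (take (size v)./2 (rev v)) &
   v = take (size v)./2 v ++ (if odd (size v) then [:: true] else [::])
       ++ rev (take (size v)./2 (rev v))].
Proof.
move=> Hc; set r := (size v)./2.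
have Hr : r <= size v by rewrite /r; lia.
have Hsz : size v = r + r + odd (size v) by rewrite /r; lia.
split.
- by rewrite !size_take size_rev.
- apply: okpP; first by rewrite !size_take size_rev.
  move=> i; rewrite size_take => Hi.
  have Hir : i < r.
    by move: Hi; case: (ltnP r (size v)) => H1 H2; lia.
  rewrite !nth_take //; apply: Hc; lia.
- rewrite take_rev revK.
  case E: (odd (size v)).
  + have -> : size v - r = r.+1 by lia.
    rewrite -{1}(cat_take_drop r v) (drop_nth false); last by lia.
    have -> : nth false v r = true.
      have := Hc r; rewrite nth_rev; last by lia.
      have -> : size v - r.+1 = r by lia.
      by rewrite orbb => ->; lia.
    by [].
  + have -> : size v - r = r by lia.
    by rewrite /= cat_take_drop.
Qed.

Lemma frob_ub (G : {fset nat}) x : x \in G -> x <= frob G.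
Proof. move=> Hx; rewrite /frob; exact: (@leq_bigmax_seq _ _ predT (fun x => x) _ Hx). Qed.

Lemma max_seq_mem (s : seq nat) : \max_(x <- s) x = 0 \/ \max_(x <- s) x \in s.
Proof.
elim: s => [|a s IH]; first by left; rewrite big_nil.
rewrite big_cons; case: IH => [->|H]; first by rewrite maxn0; right; rewrite mem_head.
right; move: H; set M := (X in maxn a X) => H.
by rewrite /maxn; case: ifP => _; rewrite in_cons ?H ?orbT ?eqxx.
Qed.

Lemma frob_mem (G : {fset nat}) : 0 < frob G -> frob G \in G.
Proof. rewrite /frob; case: (max_seq_mem G) => [->//|H _]; exact: H. Qed.

Lemma head_filter_iota (P : pred nat) n l : has P (iota n l) ->
  [/\ P (head 0 (filter P (iota n l))), n <= head 0 (filter P (iota n l)),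
      head 0 (filter P (iota n l)) < n + l &
      forall j, n <= j < head 0 (filter P (iota n l)) -> ~~ P j].
Proof.
elim: l n => [|l IH] n //=.
case Pn: (P n) => /=.
  by move=> _; split => //; try lia; move=> j; lia.
move=> /IH [H1 H2 H3 H4]; split => //; try lia.
move=> j Hj; case: (ltnP n j) => Hnj; first by apply: H4; lia.
have Ejn : j = n by lia.
by rewrite Ejn Pn.
Qed.

Section Facts.
Variables (k g : nat) (G : {fset nat}).
Hypothesis HC : inC k g G.

Lemma factsC :
  let m := mult G in let F := frob G in
  [/\ 0 \notin G, forall x, x \in G -> x <= F, F \in G,
      [/\ 0 < m, m \notin G & forall j, 0 < j < m -> j \in G] &
      F = 2 * m + k /\ k < m].
Proof.
case: HC => [[H0 _] Hg /andP [H1 H2] HF] m F.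
have HF1 : has (inS G) (iota 1 F.+1).
  apply/hasP; exists F.+1; first by rewrite mem_iota; lia.
  rewrite /inS; apply/negP => /frob_ub; rewrite -/F; lia.
have [P1 P2 P3 P4] := head_filter_iota HF1.
split => //.
- exact: frob_ub.
- apply: frob_mem; rewrite -/F; lia.
- split; [exact: P2 | exact: P1 |].
  by move=> j Hj; have := P4 j Hj; rewrite /inS negbK.
- split; lia.
Qed.
End Facts.

Definition uG (G : {fset nat}) : seq bool :=
  [seq x \in G | x <- iota (mult G).+1 (frob G - mult G)].

Definition gens (G : {fset nat}) : seq nat :=
  [seq s <- iota (2 * mult G) ((frob G + mult G).+1 - 2 * mult G) | min_gen G s].

Section S.
Variables (k g : nat) (G : {fset nat}).
Hypothesis HC : inC k g G.

Lemma size_uG : size (uG G) = mult G + k.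
Proof.
have [_ _ _ _ [HF _]] := factsC HC.
rewrite size_map size_iota; lia.
Qed.

Lemma nth_uG j : j < size (uG G) -> nth false (uG G) j = (mult G + j.+1 \in G).
Proof.
move=> Hj; rewrite /uG (nth_map 0); last by move: Hj; rewrite size_map.
rewrite nth_iota; last by move: Hj; rewrite size_map size_iota.
by rewrite addSn addnS.
Qed.

Lemma memG n : (n \in G) = (0 < n < mult G) || (mult G < n <= frob G) && nth false (uG G) (n - (mult G).+1).
Proof.
have [H0 Hub HF [Hm0 Hm Hlt] [HFe Hk]] := factsC HC.
case: (ltnP 0 n) => Hn; last first.
  have E : n = 0 by lia.
  by rewrite E (negbTE H0).
case: (ltnP n (mult G)) => Hnm; first by rewrite Hlt //; lia.
case: (ltnP (mult G) n) => Hmn /=; last first.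
  have E : n = mult G by lia.
  by rewrite E (negbTE Hm).
case: (leqP n (frob G)) => HnF /=.
  rewrite nth_uG; last by rewrite size_uG; lia.
  by have -> : mult G + (n - (mult G).+1).+1 = n by lia.
by apply/negP => /Hub; lia.
Qed.

Lemma count_uG : genus G = (mult G).-1 + count id (uG G).
Proof.
have [H0 Hub HF [Hm0 Hm Hlt] [HFe Hk]] := factsC HC.
case: HC => _ Hg _ _.
rewrite /genus.
have Hp : perm_eq (enum_fset G) (filter (mem G) (iota 1 (frob G))).
  apply: uniq_perm; first exact: fset_uniq.
    by apply: filter_uniq; apply: iota_uniq.
  move=> x; rewrite mem_filter mem_iota /=.
  case Hx: (x \in enum_fset G) => //=; apply/esym.
  have Hx' : x \in G by [].
  have := Hub _ Hx'; case: (ltnP 0 x) => H1 H2; first by lia.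
  have E : x = 0 by lia.
  by move: Hx'; rewrite E (negbTE H0).
rewrite (perm_size Hp) size_filter.
have -> : frob G = (mult G).-1 + (1 + (frob G - mult G)) by lia.
rewrite !iotaD !count_cat /uG count_map.
have -> : count (mem G) (iota 1 (mult G).-1) = (mult G).-1.
  have : all (mem G) (iota 1 (mult G).-1).
    by apply/allP => j; rewrite mem_iota => Hj; apply: Hlt; lia.
  by rewrite all_count size_iota => /eqP.
have -> : 1 + (mult G).-1 = mult G by lia.
rewrite /= (negbTE Hm) add0n.
have -> : mult G + 1 = (mult G).+1 by lia.
congr (_ + _); by apply: eq_count.
Qed.

Lemma wt_uG : wt (uG G) = g + k + 1.
Proof.
have [_ _ _ [Hm0 _ _] _] := factsC HC.
have := count_uG; case: HC => _ -> _ _.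
rewrite /wt size_uG; lia.
Qed.

Lemma last_uG : nth false (uG G) (size (uG G)).-1 = true.
Proof.
have [_ _ HF [Hm0 _ _] [HFe Hk]] := factsC HC.
rewrite nth_uG size_uG; last by lia.
by have -> : mult G + (mult G + k).-1.+1 = frob G by lia.
Qed.

Lemma e2_le : e2 G <= size (gens G).
Proof.
have [H0 Hub HF [Hm0 Hm Hlt] [HFe Hk]] := factsC HC.
rewrite /e2 /embdim /e1 /gens size_filter.
rewrite {1}(_ : (frob G + mult G).+1 = mult G + (mult G + ((frob G + mult G).+1 - 2 * mult G))); last by lia.
rewrite !iotaD !count_cat.
have -> : count (min_gen G) (iota 0 (mult G)) = 0.
  rewrite (@eq_in_count _ _ pred0) ?count_pred0 // => x; rewrite mem_iota => Hx.
  rewrite /min_gen /inS /=; case: (ltnP 0 x) => //= H1.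
  by rewrite Hlt //; lia.
have -> : 0 + mult G + mult G = 2 * mult G by lia.
have : count (min_gen G) (iota (0 + mult G) (mult G)) <= count (inS G) (iota (mult G) (mult G)).
  rewrite add0n; apply: sub_count => x /and3P [].
  by [].
have E : count [eta min_gen G] (iota (2 * mult G) ((frob G + mult G).+1 - 2 * mult G)) = count (min_gen G) (iota (2 * mult G) ((frob G + mult G).+1 - 2 * mult G)) by [].
rewrite E; lia.
Qed.

Lemma gen_help s a : min_gen G s -> 0 < a < s -> a \notin G -> s - a \notin G -> False.
Proof.
move=> /and3P [_ _ /negP Hno] Ha H1 H2; apply: Hno.
apply/existsP; have Has : a < s by lia.
exists (Ordinal Has) => /=; rewrite /inS H1 H2 andbT; lia.
Qed.

Lemma gen_prop s : s \in gens G ->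
  [/\ 0 < s - 2 * mult G, s - 2 * mult G <= size (uG G),
      nth false (uG G) (s - 2 * mult G).-1 &
      cond (take (s - 2 * mult G).-1 (uG G))].
Proof.
have [H0 Hub HF [Hm0 Hm Hlt] [HFe Hk]] := factsC HC.
rewrite /gens mem_filter mem_iota => /andP [Hmg Hr].
have Hs1 : 2 * mult G <= s by lia.
have Hs2 : s <= frob G + mult G by lia.
have Hd : 0 < s - 2 * mult G.
  case: (ltnP 0 (s - 2 * mult G)) => // Hd; exfalso.
  apply: (gen_help (a := mult G) Hmg) => //; first by lia.
  by have -> : s - mult G = mult G by lia.
have Hdu : s - 2 * mult G <= size (uG G) by rewrite size_uG; lia.
split => //.
- rewrite nth_uG; last by lia.
  apply/negPn/negP => Hn; apply: (gen_help (a := mult G) Hmg) => //; first by lia.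
  by have -> : s - mult G = mult G + (s - 2 * mult G).-1.+1 by lia.
- have Hsz : size (take (s - 2 * mult G).-1 (uG G)) = (s - 2 * mult G).-1.
    by rewrite size_takel //; lia.
  move=> j; rewrite Hsz => Hj.
  rewrite nth_rev Hsz //.
  rewrite !nth_take; [|lia|lia].
  rewrite !nth_uG; [|lia|lia].
  case: (boolP (mult G + j.+1 \in G)) => //= Ha.
  apply/negPn/negP => Hb; apply: (gen_help (a := mult G + j.+1) Hmg) => //; first by lia.
  by have -> : s - (mult G + j.+1) = mult G + ((s - 2 * mult G).-1 - j.+1).+1 by lia.
Qed.
End S.

Definition ro_of (w : seq bool) : option (seq bool) :=
  if w is [::] then None else Some (take (size w).-1 w).

Definition parts (p : {fset nat} * nat) :=
  let u := uG p.1 in let d := p.2 - 2 * mult p.1 in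
  let v := take d.-1 u in let r := (size v)./2 in
  (take r v, take r (rev v), odd (size v), ro_of (drop d u)).

Definition fmap (p : {fset nat} * nat) : bool * seq bool :=
  let: (x, y, b, ro) := parts p in enc x y b ro.

Lemma last_split (w : seq bool) : w != [::] ->
  w = take (size w).-1 w ++ [:: nth false w (size w).-1].
Proof.
case/lastP: w => // w' c _; rewrite size_rcons /= -cats1 take_size_cat //.
by rewrite nth_cat ltnn subnn.
Qed.

Section P.
Variables (k g : nat) (G : {fset nat}) (s : nat).
Hypothesis HC : inC k g G.
Hypothesis Hs : s \in gens G.

Lemma parts_ok : let: (x, y, b, ro) := parts (G, s) in
  [/\ size x = size y, okp x y, uG G = build x y b ro &
      (s - 2 * mult G).-1 = size x + b + size y].
Proof.
have [Hd Hdu Hn Hc] := gen_prop HC Hs.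
rewrite /parts /=.
set u := uG G in Hdu Hn Hc *; set d := s - 2 * mult G in Hd Hdu Hn Hc *.
set v := take d.-1 u in Hc *.
have [H1 H2 H3] := decomp Hc.
have Hsv : size v = d.-1 by rewrite size_takel //; lia.
split => //.
- have -> : build (take (size v)./2 v) (take (size v)./2 (rev v)) (odd (size v)) (ro_of (drop d u))
      = v ++ true :: (match ro_of (drop d u) with Some r => r ++ [:: true] | None => [::] end).
    by rewrite /build [in RHS]H3 -!catA.
  rewrite -{1}(cat_take_drop d.-1 u) (drop_nth false); last by lia.
  rewrite -/v Hn; congr (_ ++ _ :: _).
  have -> : d.-1.+1 = d by lia.
  rewrite /ro_of; case E: (drop d u) => [|a w] //.
  rewrite -E {1}(@last_split (drop d u)); last by rewrite E.
  congr (_ ++ [:: _]).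
  rewrite nth_drop size_drop.
  have -> : d + (size u - d).-1 = (size u).-1.
    have : d < size u.
      case: (ltnP d (size u)) => // Hx.
      by move: E; rewrite drop_oversize.
    lia.
  exact: last_uG HC.
- rewrite -Hsv; have := congr1 size H3; rewrite !size_cat size_rev.
  by case: (odd (size v)) => /= E; lia.
Qed.
End P.

Lemma fmap_inj k g G s G' s' : inC k g G -> s \in gens G -> inC k g G' -> s' \in gens G' ->
  fmap (G, s) = fmap (G', s') -> (G, s) = (G', s').
Proof.
move=> HC Hs HC' Hs'.
have [Hd _ _ _] := gen_prop HC Hs.
have [Hd' _ _ _] := gen_prop HC' Hs'.
move: (parts_ok HC Hs) (parts_ok HC' Hs'); rewrite /fmap.
case: (parts (G, s)) => [[[x y] b] ro]; case: (parts (G', s')) => [[[x' y'] b'] ro'].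
move=> [Hs1 Hok1 Hu1 Hd1] [Hs2 Hok2 Hu2 Hd2] E.
have := congr1 dec E; rewrite !decK // => [[ex ey eb ero]]; subst x' y' b' ro'.
have Hu : uG G = uG G' by rewrite Hu1 Hu2.
have Hm : mult G = mult G'.
  have := size_uG HC; have := size_uG HC'; rewrite Hu; lia.
have [_ _ _ _ [HF _]] := factsC HC.
have [_ _ _ _ [HF' _]] := factsC HC'.
have HFF : frob G = frob G' by rewrite HF HF' Hm.
have HG : G = G'.
  by apply/fsetP => n; rewrite (memG HC) (memG HC') Hm HFF Hu.
subst G'; congr (_, _); lia.
Qed.

Definition pairsL (L : seq {fset nat}) := flatten [seq [seq (G, s) | s <- gens G] | G <- L].

Lemma mem_pairsL L G s : (G, s) \in pairsL L -> G \in L /\ s \in gens G.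
Proof.
elim: L => [|H L IH] //=; rewrite mem_cat => /orP [|/IH [H1 H2]].
  by case/mapP => t Ht [-> ->]; rewrite mem_head.
by rewrite in_cons H1 orbT.
Qed.

Lemma uniq_pairsL L : uniq L -> uniq (pairsL L).
Proof.
elim: L => [|H L IH] //= /andP [HL Hu].
rewrite cat_uniq IH // andbT; apply/andP; split.
  rewrite map_inj_uniq; last by move=> a b [].
  by apply: filter_uniq; apply: iota_uniq.
apply/hasPn => [[G s]] /mem_pairsL [HG _]; apply/mapP => [[t _ [E _]]].
by move: HL; rewrite -E HG.
Qed.

Lemma sum_pairsL k g L : (forall G, G \in L -> inC k g G) ->
  \sum_(G <- L) e2 G <= size (pairsL L).
Proof.
elim: L => [|H L IH] HL; first by rewrite big_nil.
rewrite big_cons /= size_cat size_map; apply: leq_add.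
  by apply: e2_le; apply: HL; rewrite mem_head.
by apply: IH => G HG; apply: HL; rewrite in_cons HG orbT.
Qed.

Theorem lemma4p2 (g k : nat) (hg : 0 < g) (hk : 0 < k)
  (L : seq {fset nat}) (huniq : uniq L)
  (hL : forall G, G \in L -> inC k g G) :
  \sum_(G <- L) e2 G <= 2 * fib (g + k).
Proof.
apply: (leq_trans (sum_pairsL hL)).
set T := [seq (b, t) | b <- [:: true; false], t <- tl (g + k - 1)].
have HT : size T = 2 * fib (g + k).
  rewrite size_allpairs /=; have [H1 _] := size_tl (g + k - 1).
  by rewrite H1; have -> : (g + k - 1).+1 = g + k by lia.
rewrite -HT -(size_map fmap); apply: uniq_leq_size.
  rewrite map_inj_in_uniq; first exact: uniq_pairsL.
  move=> [G s] [G' s'] /mem_pairsL [HG Hs] /mem_pairsL [HG' Hs'].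
  exact: fmap_inj (hL _ HG) Hs (hL _ HG') Hs'.
move=> z /mapP [[G s] /mem_pairsL [HG Hs] ->].
have HC := hL _ HG.
have Hw := wt_uG HC.
move: (parts_ok HC Hs); rewrite /fmap.
case: (parts (G, s)) => [[[x y] b] ro] [Hs1 _ Hu _].
have := wt_enc b ro Hs1; rewrite -Hu Hw => Hwt.
have -> : enc x y b ro = (b, (enc x y b ro).2) by [].
apply: allpairs_f; first by rewrite !inE; case: (b).
have -> : g + k - 1 = wt (enc x y b ro).2 by lia.
exact: mem_tl.
Qed.
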